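(* Let $\Omega=\{x\in\mathbb{R}^n: x^L\le x\le x^U\}$ with $x^L,x^U\in\mathbb{R}^n$ and $x^L_i<x^U_i$ for $i=1,\ldots,n$. Given any $x\in\Omega$ and $\alpha>0$, define $\alpha_{-i}:=\min(\alpha,x_i-x^L_i)$ and $\alpha_i:=\min(\alpha,x^U_i-x_i)$ for $i=1,\ldots,n$, and let $\mathcal{D}:=\bigcup_{i=1}^n\{-\alpha_{-i}e_i,\ \alpha_ie_i\}$, where $e_i$ are the coordinate vectors. Then $\mathcal{D}$ is a $\Lambda$-positive spanning set for $B(x,\alpha)\cap\Omega$ with $$\Lambda=\min\left[n,\ \frac{\sqrt n\,\alpha}{\min\left\{\alpha,\ \min_{i:\,x_i\neq x^L_i}(x_i-x^L_i),\ \min_{i:\,x_i\neq x^U_i}(x^U_i-x_i)\right\}}\right].$$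
   Context: $\|\cdot\|$ is the Euclidean norm, $B(y,r)=\{z:\|z-y\|\le r\}$. Given $x\in\Omega$, $\alpha>0$, $\Lambda\ge0$, a set $\{d_1,\ldots,d_p\}\subset\mathbb{R}^n$ is a $\Lambda$-positive spanning set for $B(x,\alpha)\cap\Omega$ if $x+d_i\in\Omega$ for all $i$ and, for every $v\in\mathbb{R}^n$ with $x+v\in\Omega$ and $\|v\|\le\alpha$, there exists $c\in\mathbb{R}^p$ with $c\ge0$, $v=\sum_ic_id_i$ and $\|c\|_1\le\Lambda$. (Directions with $\alpha_{\pm i}=0$ are zero vectors in $\mathcal{D}$.) *)

(* Defs.v *)
From mathcomp Require Import all_boot all_order all_algebra.
Set Implicit Arguments. Unset Strict Implicit. Unset Printing Implicit Defensive.
Import Order.TTheory GRing.Theory Num.Theory.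
Local Open Scope ring_scope.

Section Defs.
Variable R : rcfType.

Definition enorm (n : nat) (v : 'I_n -> R) : R := Num.sqrt (\sum_(k < n) v k ^+ 2).

Definition ecoord (n : nat) (i : 'I_n) : 'I_n -> R := fun k => if k == i then 1 else 0.

Definition box (n : nat) (xL xU : 'I_n -> R) : ('I_n -> R) -> Prop :=
  fun y => forall k, xL k <= y k <= xU k.

Definition Lambda_pss (n : nat) (I : finType) (Omega : ('I_n -> R) -> Prop)
    (x : 'I_n -> R) (alpha Lam : R) (d : I -> 'I_n -> R) : Prop :=
  (forall j, Omega (fun k => x k + d j k)) /\
  (forall v : 'I_n -> R, Omega (fun k => x k + v k) -> enorm v <= alpha ->
     exists c : I -> R, (forall j, 0 <= c j) /\
       (forall k, v k = \sum_(j : I) c j * d j k) /\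
       \sum_(j : I) `|c j| <= Lam).

Definition alpha_minus (n : nat) (xL x : 'I_n -> R) (alpha : R) (i : 'I_n) : R :=
  Num.min alpha (x i - xL i).
Definition alpha_plus (n : nat) (xU x : 'I_n -> R) (alpha : R) (i : 'I_n) : R :=
  Num.min alpha (xU i - x i).

(* the set D, indexed by (i, b): b = false gives -alpha_{-i} e_i, b = true gives alpha_i e_i *)
Definition coordD (n : nat) (xL xU x : 'I_n -> R) (alpha : R) (p : 'I_n * bool) : 'I_n -> R :=
  fun k => if p.2 then alpha_plus xU x alpha p.1 * ecoord p.1 k
           else - (alpha_minus xL x alpha p.1 * ecoord p.1 k).

(* min{alpha, min_{i: x_i <> xL_i}(x_i - xL_i), min_{i: x_i <> xU_i}(xU_i - x_i)}
   (a min over an empty index set is simply omitted) *)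
Definition min_gap (n : nat) (xL xU x : 'I_n -> R) (alpha : R) : R :=
  Num.min (\big[Num.min/alpha]_(i < n | x i != xL i) (x i - xL i))
          (\big[Num.min/alpha]_(i < n | x i != xU i) (xU i - x i)).

Definition Lambda_box (n : nat) (xL xU x : 'I_n -> R) (alpha : R) : R :=
  Num.min (n%:R) (Num.sqrt (n%:R) * alpha / min_gap xL xU x alpha).

End Defs.

(* Main.v *)
Require Import Defs.
From mathcomp Require Import all_boot all_order all_algebra.
From mathcomp Require Import ring lra.
Import Order.TTheory GRing.Theory Num.Theory.
Local Open Scope ring_scope.

Lemma cs_abs (R : rcfType) (n : nat) (v : 'I_n -> R) :
  \sum_(i < n) `|v i| <= Num.sqrt (n%:R) * enorm v.
Proof.
rewrite /enorm -sqrtrM ?ler0n //.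
rewrite -(@ger0_norm _ (\sum_i `|v i|)); last by apply: sumr_ge0 => i _.
rewrite -sqrtr_sqr ler_wsqrtr //.
have H : 2 * (\sum_(i < n) `|v i|) ^+ 2 <= 2 * (n%:R * \sum_(i < n) v i ^+ 2).
  have -> : 2 * (n%:R * \sum_(i < n) v i ^+ 2) =
     \sum_(i < n) \sum_(j < n) (v i ^+ 2 + v j ^+ 2).
    symmetry.
    rewrite (eq_bigr (fun i => n%:R * v i ^+ 2 + \sum_(j < n) v j ^+ 2)); last first.
      by move=> i _; rewrite big_split /= sumr_const card_ord mulr_natl.
    rewrite big_split /= sumr_const card_ord -mulr_sumr -mulr_natl; ring.
  rewrite expr2 mulr_suml mulr_sumr; apply: ler_sum => i _.
  rewrite mulr_sumr mulr_sumr; apply: ler_sum => j _.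
  rewrite -(real_normK (num_real (v i))) -(real_normK (num_real (v j))).
  have := sqr_ge0 (`|v i| - `|v j|); nra.
lra.
Qed.

Lemma min_facts (R : rcfType) (a b : R) :
  [/\ Num.min a b <= a, Num.min a b <= b & (Num.min a b = a \/ Num.min a b = b)].
Proof. rewrite minEle; case: ifP => h.
  split; [exact: lexx|exact: h|by left].
move/negbT: h; rewrite -ltNge => h.
split; [exact: ltW|exact: lexx|by right]. Qed.

Lemma posneg (R : rcfType) (u : R) :
  [/\ Num.max u 0 - Num.max (-u) 0 = u, Num.max u 0 + Num.max (-u) 0 = `|u|,
      0 <= Num.max u 0, 0 <= Num.max (-u) 0 &
      (Num.max u 0 = 0 \/ Num.max (-u) 0 = 0)].
Proof.
case: (lerP u 0) => h; [rewrite (ler0_norm h) | rewrite (gtr0_norm h)];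
  rewrite !maxEle; case: leP => h1; case: leP => h2;
  (split; [lra|lra|lra|lra|]); (by left) || (by right) || lra.
Qed.

Lemma coef_facts (R : rcfType) (u a g al mm : R) :
  0 <= u -> u <= g -> u <= al -> 0 < mm -> mm <= al -> (0 < u -> mm <= g) ->
  a = Num.min al g ->
  [/\ u / a * a = u, 0 <= u / a, u / a <= 1 & u / a <= u / mm].
Proof.
move=> u0 ug ual mm0 mmal hg ->.
have [->|upos] := eqVneq u 0; first by rewrite !mul0r; split=> //; exact: ler01.
have u0' : 0 < u by rewrite lt_neqAle eq_sym upos u0.
have mg := hg u0'.
have [h1 h2 _] := @min_facts _ al g.
have mma : mm <= Num.min al g by rewrite le_min mmal mg.
have ua : u <= Num.min al g by rewrite le_min ual ug.
have apos : 0 < Num.min al g by apply: lt_le_trans mma.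
split.
- by rewrite divfK // gt_eqF.
- by rewrite divr_ge0 // ltW.
- by rewrite ler_pdivrMr // mul1r.
- rewrite ler_pdivrMr // mulrAC ler_pdivlMr //; exact: ler_wpM2l.
Qed.

Lemma pairE (R : rcfType) (n : nat) (F : 'I_n * bool -> R) :
  \sum_(p : 'I_n * bool) F p = \sum_(i < n) (F (i, true) + F (i, false)).
Proof.
rewrite (eq_bigr (fun p => F (p.1, p.2))); last by case.
rewrite -(pair_bigA _ (fun i b => F (i, b))); apply: eq_bigr => i _.
by rewrite big_bool.
Qed.

Theorem theorem5p1 (R : rcfType) (n : nat) (xL xU x : 'I_n -> R) (alpha : R) :
  (forall i, xL i < xU i) ->
  box xL xU x ->
  0 < alpha ->
  Lambda_pss (box xL xU) x alpha (Lambda_box xL xU x alpha) (coordD xL xU x alpha).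
Proof.
move=> hLU hx ha.
set m := min_gap xL xU x alpha.
have hxi i : xL i <= x i /\ x i <= xU i by have /andP[] := hx i.
have m_gt0 : 0 < m.
  rewrite /m /min_gap lt_min; apply/andP; split; apply/bigmin_gtP; split => // i ne.
  + have [h1 _] := hxi i; rewrite subr_gt0 lt_neqAle eq_sym ne; exact: h1.
  + have [_ h1] := hxi i; rewrite subr_gt0 lt_neqAle ne; exact: h1.
have m_le_a : m <= alpha.
  by rewrite /m /min_gap ge_min bigmin_le_id.
have m_le_L i : x i != xL i -> m <= x i - xL i.
  by move=> ne; rewrite /m /min_gap ge_min (bigmin_le_cond _ (P := fun j => x j != _) _ ne).
have m_le_U i : x i != xU i -> m <= xU i - x i.
  by move=> ne; rewrite /m /min_gap ge_min (bigmin_le_cond _ (P := fun j => x j != _) _ ne) orbT.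
split.
  move=> [i b] k /=; rewrite /coordD /ecoord /alpha_plus /alpha_minus /=.
  have [h1 h2] := hxi k.
  have [hm1 hm2 _] := @min_facts _ alpha (xU i - x i).
  have [hm3 hm4 _] := @min_facts _ alpha (x i - xL i).
  have [hi1 hi2] := hxi i.
  have g1 : 0 <= Num.min alpha (xU i - x i) by rewrite le_min (ltW ha) subr_ge0.
  have g2 : 0 <= Num.min alpha (x i - xL i) by rewrite le_min (ltW ha) subr_ge0.
  case: b; case: eqP => [->|_]; rewrite ?mulr1 ?mulr0 ?oppr0 ?addr0 /=;
    apply/andP; split; try lra.
move=> v hv hnv.
have vi_le i : `|v i| <= alpha.
  apply: le_trans hnv; rewrite /enorm -sqrtr_sqr; apply: ler_wsqrtr.
  rewrite (bigD1 i) //= lerDl; apply: sumr_ge0 => j _; exact: sqr_ge0.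
set ap := alpha_plus xU x alpha.
set am := alpha_minus xL x alpha.
set c := fun p : 'I_n * bool => if p.2 then Num.max (v p.1) 0 / ap p.1
                              else Num.max (- v p.1) 0 / am p.1.
have key i : [/\ c (i, true) * ap i = Num.max (v i) 0,
                 c (i, false) * am i = Num.max (- v i) 0,
                 0 <= c (i, true), 0 <= c (i, false) &
                 c (i, true) + c (i, false) <= 1 /\
                 c (i, true) + c (i, false) <= `|v i| / m].
  have [e1 e2 p1 p2 z] := @posneg _ (v i).
  have [hi1 hi2] := hxi i.
  move: (hv i) => /andP[]; rewrite /= => hv1 hv2.
  have va : `|v i| <= alpha := vi_le i.
  have [ap1 ap2 ap3 ap4] : [/\ Num.max (v i) 0 / ap i * ap i = Num.max (v i) 0,
      0 <= Num.max (v i) 0 / ap i, Num.max (v i) 0 / ap i <= 1 &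
      Num.max (v i) 0 / ap i <= Num.max (v i) 0 / m].
    apply: (@coef_facts _ _ _ (xU i - x i) alpha) => //.
    - rewrite maxEle; case: (leP (v i) 0) => _; lra.
    - have := ler_norm (v i); rewrite maxEle; case: (leP (v i) 0) => _; lra.
    - move=> hp; apply: m_le_U; apply/eqP => e.
      move: hp; rewrite maxEle; case: (leP (v i) 0) => _; lra.
  have [am1 am2 am3 am4] : [/\ Num.max (- v i) 0 / am i * am i = Num.max (- v i) 0,
      0 <= Num.max (- v i) 0 / am i, Num.max (- v i) 0 / am i <= 1 &
      Num.max (- v i) 0 / am i <= Num.max (- v i) 0 / m].
    apply: (@coef_facts _ _ _ (x i - xL i) alpha) => //.
    - rewrite maxEle; case: (leP (- v i) 0) => _; lra.
    - have := ler_normr (v i); rewrite maxEle; case: (leP (- v i) 0) => _; lra.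
    - move=> hp; apply: m_le_L; apply/eqP => e.
      move: hp; rewrite maxEle; case: (leP (- v i) 0) => _; lra.
  rewrite /c /=; split => //; split.
  - case: z => ->; rewrite mul0r ?addr0 ?add0r //.
  - rewrite -e2 mulrDl; exact: lerD.
exists c; split; [|split].
- by move=> [i []]; have [_ _ ? ? _] := key i.
- move=> k; rewrite pairE (bigD1 k) //= big1 ?addr0; last first.
    move=> i /negbTE ne; rewrite /coordD /ecoord /= eq_sym ne.
    by rewrite !mulr0 oppr0 mulr0 addr0.
  rewrite /coordD /ecoord /= eqxx !mulr1.
  have [k1 k2 _ _ _] := key k; have [e1 _ _ _ _] := @posneg _ (v k).
  by rewrite k1 mulrN k2 e1.
- rewrite pairE /Lambda_box le_min; apply/andP; split.
  + apply: le_trans (_ : \sum_(i < n) (1 : R) <= _); last by rewrite sumr_const card_ord.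
    apply: ler_sum => i _; have [_ _ g1 g2 [h _]] := key i.
    by rewrite (ger0_norm g1) (ger0_norm g2).
  + apply: le_trans (_ : \sum_(i < n) (`|v i| / m) <= _).
      apply: ler_sum => i _; have [_ _ g1 g2 [_ h]] := key i.
      by rewrite (ger0_norm g1) (ger0_norm g2).
    rewrite -mulr_suml ler_pM2r ?invr_gt0 //.
    apply: le_trans (@cs_abs _ _ v) _; apply: ler_wpM2l => //; exact: sqrtr_ge0.
Qed.
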